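(* Consider problem (P) and suppose Assumptions A, B, C and E hold. If $\bar F$ is a KL function with exponent $\alpha\in[0,1)$, then $F$ is also a KL function with exponent $\alpha$.
   Context: Problem (P): $\min_{x\in\mathbb R^n}F(x):=f(x)+P_1(x)-P_2(x)+\delta_{\{g\le 0\}}(x)$, where $f:\mathbb R^n\to\mathbb R$ is continuously differentiable, $P_1,P_2:\mathbb R^n\to\mathbb R$ are convex and continuous, $g=(g_1,\dots,g_m):\mathbb R^n\to\mathbb R^m$ is continuous with $\{x:g(x)\le0\}\neq\emptyset$ (componentwise inequalities), $\delta_C$ the indicator function of $C$; $\partial$ is the limiting subdifferential. Assumption A: (i) $\nabla f$ is Lipschitz with modulus $L_f$; (ii) each $g_i$ is differentiable with $\nabla g_i$ Lipschitz with modulus $L_{g_i}$; (iii) $F$ is level-bounded. Assumption B (MFCQ): each $g_i$ is continuously differentiable and for every $x$ with $g(x)\le0$ there is $d$ with $\langle\nabla g_i(x),d\rangle<0$ for all $i\in I(x):=\{j:g_j(x)=0\}$. Assumption C: each $g_i$ is twice continuously differentiable. Assumption E: $P_2\equiv0$ and $f,g_1,\dots,g_m$ are convex. $\bar G(x,y,w)\in\mathbb R^m$ ($x,y\in\mathbb R^n,w\in\mathbb R^m$) has components $\bar G_i(x,y,w)=g_i(y)+\langle\nabla g_i(y),x-y\rangle+\frac{w_i}{2}\|x-y\|^2$, and $\bar F(x,y,w):=f(x)+P_1(x)-P_2(x)+\delta_{\{\bar G\le0\}}(x,y,w)$. KL function with exponent $\alpha\in[0,1)$: a proper closed $h$ such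 that at every $\hat x\in{\rm dom}\,\partial h$ there exist $a\in(0,\infty]$, a neighborhood $V$ of $\hat x$ and $a_0>0$ with $a_0(1-\alpha)(h(x)-h(\hat x))^{-\alpha}\,{\rm dist}(0,\partial h(x))\ge1$ for all $x\in V$ with $h(\hat x)<h(x)<h(\hat x)+a$. *)

(* Defs.v *)
From mathcomp Require Import ssreflect ssrfun ssrbool eqtype ssrnat seq fintype bigop.
From Stdlib Require Import Reals ClassicalEpsilon.
Set Implicit Arguments.
Unset Strict Implicit.
Open Scope R_scope.

Definition vec (n : nat) := 'I_n -> R.
Definition vdot {n} (x y : vec n) : R := \big[Rplus/0]_(i < n) (x i * y i).
Definition vadd {n} (x y : vec n) : vec n := fun i => x i + y i.
Definition vsub {n} (x y : vec n) : vec n := fun i => x i - y i.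
Definition vscal {n} (a : R) (x : vec n) : vec n := fun i => a * x i.
Definition vnorm {n} (x : vec n) : R := sqrt (vdot x x).
Definition matvec {n} (M : 'I_n -> 'I_n -> R) (x : vec n) : vec n :=
  fun i => \big[Rplus/0]_(j < n) (M i j * x j).

Record Euc := { car : Type; csub : car -> car -> car; cdot : car -> car -> R }.
Definition cnorm (E : Euc) (v : car E) : R := sqrt (cdot v v).

Definition vecE (n : nat) : Euc := {| car := vec n; csub := @vsub n; cdot := @vdot n |}.

Definition tripE (n m : nat) : Euc :=
  {| car := (vec n * vec n * vec m)%type;
     csub := fun a b => (vsub (fst (fst a)) (fst (fst b)),
                         vsub (snd (fst a)) (snd (fst b)),
                         vsub (snd a) (snd b));
     cdot := fun a b => vdot (fst (fst a)) (fst (fst b))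
                        + vdot (snd (fst a)) (snd (fst b))
                        + vdot (snd a) (snd b) |}.

(* ---------- extended reals (None = +infinity) ---------- *)
Definition ereal := option R.
Definition r_le_e (r : R) (e : ereal) : Prop :=
  match e with None => True | Some a => r <= a end.
Definition r_lt_e (r : R) (e : ereal) : Prop :=
  match e with None => True | Some a => r < a end.

(* value r if P holds, +infinity otherwise: r + indicator of P *)
Definition add_ind (P : Prop) (r : R) : ereal :=
  match excluded_middle_informative P with left _ => Some r | right _ => None end.

Definition proper (E : Euc) (h : car E -> ereal) : Prop :=
  exists x r, h x = Some r.

Definition lsc (E : Euc) (h : car E -> ereal) : Prop :=
  forall x t, r_lt_e t (h x) ->
    exists del, 0 < del /\ forall z, cnorm (csub z x) < del -> r_lt_e t (h z).

Definition frechet_sub (E : Euc) (h : car E -> ereal) (x v : car E) : Prop :=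
  exists hx, h x = Some hx /\
    forall eps, 0 < eps -> exists del, 0 < del /\
      forall z, cnorm (csub z x) < del ->
        r_le_e (hx + cdot v (csub z x) - eps * cnorm (csub z x)) (h z).

Definition limiting_sub (E : Euc) (h : car E -> ereal) (x v : car E) : Prop :=
  exists (xs vs : nat -> car E) (hs : nat -> R) (hx : R),
    h x = Some hx /\
    Un_cv (fun k => cnorm (csub (xs k) x)) 0 /\
    (forall k, h (xs k) = Some (hs k)) /\ Un_cv hs hx /\
    (forall k, frechet_sub h (xs k) (vs k)) /\
    Un_cv (fun k => cnorm (csub (vs k) v)) 0.

(* KL function with exponent alpha.  a in (0,+infinity] is an ereal;
   dist(0, dh(x)) >= c is written as: every v in dh(x) has norm >= c
   (dist to the empty set = +infinity). *)
Definition KL_exp (E : Euc) (h : car E -> ereal) (alpha : R) : Prop :=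
  proper h /\ lsc h /\
  forall xh, (exists v, limiting_sub h xh v) ->
    exists hxh, h xh = Some hxh /\
    exists (a : ereal), r_lt_e 0 a /\
    exists del a0, 0 < del /\ 0 < a0 /\
      forall x hx, cnorm (csub x xh) < del -> h x = Some hx ->
        hxh < hx -> r_lt_e (hx - hxh) a ->
        forall v, limiting_sub h x v ->
          a0 * (1 - alpha) * Rpower (hx - hxh) (- alpha) * cnorm v >= 1.

Definition has_grad {n} (f : vec n -> R) (gf : vec n -> vec n) : Prop :=
  forall x eps, 0 < eps -> exists del, 0 < del /\ forall y, vnorm (vsub y x) < del ->
    Rabs (f y - f x - vdot (gf x) (vsub y x)) <= eps * vnorm (vsub y x).

Definition has_jac {n} (G : vec n -> vec n) (H : vec n -> 'I_n -> 'I_n -> R) : Prop :=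
  forall x eps, 0 < eps -> exists del, 0 < del /\ forall y, vnorm (vsub y x) < del ->
    vnorm (vsub (vsub (G y) (G x)) (matvec (H x) (vsub y x))) <= eps * vnorm (vsub y x).

Definition rcont {n} (f : vec n -> R) : Prop :=
  forall x eps, 0 < eps -> exists del, 0 < del /\ forall y, vnorm (vsub y x) < del ->
    Rabs (f y - f x) < eps.

Definition vcont {n} (G : vec n -> vec n) : Prop :=
  forall x eps, 0 < eps -> exists del, 0 < del /\ forall y, vnorm (vsub y x) < del ->
    vnorm (vsub (G y) (G x)) < eps.

Definition lipschitz {n} (G : vec n -> vec n) (L : R) : Prop :=
  forall x y, vnorm (vsub (G x) (G y)) <= L * vnorm (vsub x y).

Definition convex {n} (P : vec n -> R) : Prop :=
  forall x y lam, 0 <= lam <= 1 ->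
    P (vadd (vscal lam x) (vscal (1 - lam) y)) <= lam * P x + (1 - lam) * P y.

Definition level_bounded {n} (F : vec n -> ereal) : Prop :=
  forall t, exists M, forall x r, F x = Some r -> r <= t -> vnorm x <= M.

Definition feasible {n m} (g : 'I_m -> vec n -> R) (x : vec n) : Prop :=
  forall i, g i x <= 0.

Definition Fobj {n m} (f P1 P2 : vec n -> R) (g : 'I_m -> vec n -> R) (x : vec n) : ereal :=
  add_ind (feasible g x) (f x + P1 x - P2 x).

Definition Gbar {n m} (g : 'I_m -> vec n -> R) (gg : 'I_m -> vec n -> vec n)
  (x y : vec n) (w : vec m) (i : 'I_m) : R :=
  g i y + vdot (gg i y) (vsub x y) + w i / 2 * (vnorm (vsub x y)) ^ 2.

Definition Fbar {n m} (f P1 P2 : vec n -> R) (g : 'I_m -> vec n -> R)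
  (gg : 'I_m -> vec n -> vec n) (u : car (tripE n m)) : ereal :=
  let x := fst (fst u) in let y := snd (fst u) in let w := snd u in
  add_ind (forall i, Gbar g gg x y w i <= 0) (f x + P1 x - P2 x).

(* MFCQ (Assumption B, with gg i the gradient of g i) *)
Definition MFCQ {n m} (g : 'I_m -> vec n -> R) (gg : 'I_m -> vec n -> vec n) : Prop :=
  forall x, feasible g x -> exists d : vec n,
    forall i, g i x = 0 -> vdot (gg i x) d < 0.

Arguments KL_exp E h alpha : clear implicits.

(* Main.v *)
Require Import Defs.
From mathcomp Require Import ssreflect ssrfun ssrbool eqtype ssrnat seq fintype bigop.
From Stdlib Require Import Reals Lra Psatz FunctionalExtensionality ClassicalEpsilon.
Open Scope R_scope.
Set Implicit Arguments.

Lemma sumD n (F G : 'I_n -> R) :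
  \big[Rplus/0]_(i < n) (F i + G i) = \big[Rplus/0]_(i < n) F i + \big[Rplus/0]_(i < n) G i.
Proof.
elim: n F G => [|n IH] F G; first by rewrite !big_ord0; lra.
rewrite !big_ord_recl IH; ring.
Qed.

Lemma sumZ n (a : R) (F : 'I_n -> R) :
  \big[Rplus/0]_(i < n) (a * F i) = a * \big[Rplus/0]_(i < n) F i.
Proof.
elim: n F => [|n IH] F; first by rewrite !big_ord0; lra.
rewrite !big_ord_recl IH; ring.
Qed.

Lemma sum_ge0 n (F : 'I_n -> R) : (forall i, 0 <= F i) -> 0 <= \big[Rplus/0]_(i < n) F i.
Proof.
elim: n F => [|n IH] F H; first by rewrite !big_ord0; lra.
rewrite !big_ord_recl. have := IH (fun i => F (lift ord0 i)) (fun i => H _).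
have := H ord0. lra.
Qed.

Lemma le_add_l (a b c : R) : 0 <= a -> b <= c -> b <= a + c.
Proof. lra. Qed.
Lemma le_add_r (a b c : R) : 0 <= c -> b <= a -> b <= a + c.
Proof. lra. Qed.

Lemma sum_ge_term n (F : 'I_n -> R) j : (forall i, 0 <= F i) -> F j <= \big[Rplus/0]_(i < n) F i.
Proof.
elim: n F j => [|n IH] F j H; first by case: j.
rewrite !big_ord_recl.
case: (unliftP (@ord0 n) j) => [j' ->|->].
- apply: le_add_l; first exact: H.
  exact: (IH (fun i => F (lift ord0 i)) j' (fun i => H _)).
- apply: le_add_r; last exact: Rle_refl.
  exact: (sum_ge0 (fun i => F (lift ord0 i)) (fun i => H _)).
Qed.

Lemma vdot_ext n (a a' b b' : vec n) : (forall j, a j = a' j) -> (forall j, b j = b' j) ->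
  vdot a b = vdot a' b'.
Proof. move=> Ha Hb; rewrite /vdot; apply: eq_bigr => i _; by rewrite Ha Hb. Qed.
Arguments vdot_ext {n a a' b b'} _ _.

Lemma sum_eq0 n (F : 'I_n -> R) : (forall i, F i = 0) -> \big[Rplus/0]_(i < n) F i = 0.
Proof. move=> H. rewrite (eq_bigr (fun i => 0 * 1)); last by move=> i _; rewrite H; ring.
rewrite sumZ; ring. Qed.

Lemma vdot_ge0 n (a : vec n) : 0 <= vdot a a.
Proof. apply: sum_ge0 => i; nra. Qed.

Lemma vdot_vsub_l n (a b d : vec n) : vdot (vsub a b) d = vdot a d - vdot b d.
Proof.
rewrite /vdot (eq_bigr (fun i => a i * d i + (-1) * (b i * d i))); last by move=> i _; rewrite /vsub; ring.
rewrite sumD sumZ; ring.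
Qed.

Lemma vdot_scal_r n (a d : vec n) h : vdot a (vscal h d) = h * vdot a d.
Proof.
rewrite /vdot (eq_bigr (fun i => h * (a i * d i))); last by move=> i _; rewrite /vscal; ring.
by rewrite sumZ.
Qed.

Lemma vnorm_ge0 n (a : vec n) : 0 <= vnorm a.
Proof. exact: sqrt_pos. Qed.

Lemma vnorm_scal n (d : vec n) h : vnorm (vscal h d) = Rabs h * vnorm d.
Proof.
rewrite /vnorm.
have -> : vdot (vscal h d) (vscal h d) = Rsqr h * vdot d d.
  rewrite /vdot (eq_bigr (fun i => Rsqr h * (d i * d i))); last by move=> i _; rewrite /vscal /Rsqr; ring.
  by rewrite sumZ.
rewrite sqrt_mult_alt; last exact: Rle_0_sqr.
by rewrite sqrt_Rsqr_abs.
Qed.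

Lemma CS n (a b : vec n) : vdot a b <= vnorm a * vnorm b.
Proof.
set A := vdot a a. set B := vdot b b. set C := vdot a b.
have Q : forall t, 0 <= A - 2 * t * C + t * t * B.
  move=> t.
  have E : vdot (fun j => a j - t * b j) (fun j => a j - t * b j) = A - 2 * t * C + t * t * B.
    rewrite /vdot (eq_bigr (fun i => (a i * a i + (-2 * t) * (a i * b i)) + (t * t) * (b i * b i)));
      last by move=> i _; ring.
    rewrite !sumD !sumZ /A /B /C /vdot; ring.
  rewrite -E; exact: vdot_ge0.
have HA : 0 <= A by exact: vdot_ge0.
have HB : 0 <= B by exact: vdot_ge0.
have sA := sqrt_sqrt A HA. have sB := sqrt_sqrt B HB.
have pA := sqrt_pos A. have pB := sqrt_pos B.
rewrite /vnorm -/A -/B.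
have C2 : C * C <= A * B.
  case: (Req_dec B 0) => HB0.
  - case: (Req_dec C 0) => HC0; first by rewrite HC0 HB0; nra.
    have := Q ((A + 1) / (2 * C)). rewrite HB0.
    have -> : A - 2 * ((A + 1) / (2 * C)) * C + (A + 1) / (2 * C) * ((A + 1) / (2 * C)) * 0 = -1.
      field. exact: HC0.
    lra.
  - have := Q (C / B).
    have -> : A - 2 * (C / B) * C + C / B * (C / B) * B = (A * B - C * C) / B by field.
    move=> H. have HBp : 0 < B by lra.
    have : 0 <= (A * B - C * C) / B * B by nra.
    have -> : (A * B - C * C) / B * B = A * B - C * C by field; lra.
    lra.
have P := Rmult_le_pos _ _ pA pB.
case: (Rle_dec C (sqrt A * sqrt B)) => // Hn.
have Hlt : sqrt A * sqrt B < C by lra.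
have : (sqrt A * sqrt B) * (sqrt A * sqrt B) < C * C.
  move: P Hlt; generalize (sqrt A * sqrt B) => x; clear; nra.
have -> : sqrt A * sqrt B * (sqrt A * sqrt B) = (sqrt A * sqrt A) * (sqrt B * sqrt B) by ring.
rewrite sA sB. lra.
Qed.

Lemma comp_le n (a : vec n) j : Rabs (a j) <= vnorm a.
Proof.
rewrite -sqrt_Rsqr_abs /vnorm. apply: sqrt_le_1_alt.
rewrite /Rsqr. apply: (sum_ge_term (fun i => a i * a i)) => i; nra.
Qed.

Lemma vnorm_ext n (a a' : vec n) : (forall j, a j = a' j) -> vnorm a = vnorm a'.
Proof. move=> H; rewrite /vnorm (@vdot_ext _ a a' a a' H H) //. Qed.
Arguments vnorm_ext {n a a'} _.

Lemma descent n (g : vec n -> R) (gg : vec n -> vec n) L :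
  has_grad g gg -> lipschitz gg L ->
  forall y z, g z <= g y + vdot (gg y) (vsub z y) + Rabs L * (vnorm (vsub z y))^2.
Proof.
move=> Hg HL y z.
set d := vsub z y.
pose p t : vec n := fun j => y j + t * d j.
pose psi t := g (p t).
pose D t := vdot (gg (p t)) d.
have Nd := vnorm_ge0 d.
have deriv : forall t, derivable_pt_lim psi t (D t).
  move=> t eps Heps.
  have Heps' : 0 < eps / (2 * (vnorm d + 1)).
    apply: Rdiv_lt_0_compat; lra.
  case: (Hg (p t) _ Heps') => del [Hdel Hd].
  have Hdp : 0 < del / (vnorm d + 1) by apply: Rdiv_lt_0_compat; lra.
  exists (mkposreal _ Hdp) => h Hh0 Hh /=.
  have Ev : forall j, vsub (p (t + h)) (p t) j = vscal h d j.
    move=> j; rewrite /vsub /p /vscal; ring.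
  have Nv : vnorm (vsub (p (t + h)) (p t)) = Rabs h * vnorm d.
    by rewrite (vnorm_ext Ev) vnorm_scal.
  have Hah := Rabs_pos_lt h Hh0.
  have Hsmall : vnorm (vsub (p (t + h)) (p t)) < del.
    rewrite Nv.
    have : Rabs h * (vnorm d + 1) < del.
      move: Hh => /=. move=> Hh.
      have -> : del = del / (vnorm d + 1) * (vnorm d + 1) by field; lra.
      apply: Rmult_lt_compat_r; lra.
    nra.
  have := Hd _ Hsmall.
  rewrite Nv (@vdot_ext _ (gg (p t)) (gg (p t)) _ _ (fun j => erefl) Ev) vdot_scal_r.
  rewrite /psi -/(D t).
  set X := g (p (t + h)) - g (p t).
  move=> Hb.
  have -> : X / h - D t = (X - h * D t) * / h by field.
  rewrite Rabs_mult Rabs_inv.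
  have Hb' : Rabs (X - h * D t) <= (eps / (2 * (vnorm d + 1)) * vnorm d) * Rabs h.
    have -> : X - h * D t = g (p (t + h)) - g (p t) - h * D t by rewrite /X.
    move: Hb; rewrite /D. move=> Hb. apply: (Rle_trans _ _ _ Hb). right; ring.
  have Hk : eps / (2 * (vnorm d + 1)) * vnorm d < eps.
    have -> : eps / (2 * (vnorm d + 1)) * vnorm d = eps * (vnorm d / (2 * (vnorm d + 1))) by field; lra.
    have : vnorm d / (2 * (vnorm d + 1)) < 1.
      have -> : vnorm d / (2 * (vnorm d + 1)) = 1 - (vnorm d + 2) / (2 * (vnorm d + 1)) by field; lra.
      have : 0 < (vnorm d + 2) / (2 * (vnorm d + 1)) by apply: Rdiv_lt_0_compat; lra.
      lra.
    nra.
  have Hinv : 0 < / Rabs h by apply: Rinv_0_lt_compat.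
  apply: (Rle_lt_trans _ ((eps / (2 * (vnorm d + 1)) * vnorm d) * Rabs h * / Rabs h)).
    apply: Rmult_le_compat_r; lra.
  have -> : eps / (2 * (vnorm d + 1)) * vnorm d * Rabs h * / Rabs h =
            eps / (2 * (vnorm d + 1)) * vnorm d by field; lra.
  exact: Hk.
case: (MVT_cor2 psi D 0 1 Rlt_0_1 (fun c _ => deriv c)) => c [Hmvt Hc].
have P1 : p 1 = z by apply: functional_extensionality => j; rewrite /p /d /vsub; ring.
have P0 : p 0 = y by apply: functional_extensionality => j; rewrite /p; ring.
move: Hmvt; rewrite /psi P1 P0 => Hmvt.
have E1 : D c - vdot (gg y) d = vdot (vsub (gg (p c)) (gg y)) d by rewrite vdot_vsub_l.
have C1 := CS (vsub (gg (p c)) (gg y)) d.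
have L1 := HL (p c) y.
have Nc : vnorm (vsub (p c) y) = c * vnorm d.
  have Ev : forall j, vsub (p c) y j = vscal c d j by move=> j; rewrite /vsub /p /vscal; ring.
  rewrite (vnorm_ext Ev) vnorm_scal Rabs_pos_eq //; lra.
rewrite Nc in L1.
have Ngd := vnorm_ge0 (vsub (gg (p c)) (gg y)).
have L2 : vnorm (vsub (gg (p c)) (gg y)) * vnorm d <= L * (c * vnorm d) * vnorm d.
  apply: Rmult_le_compat_r => //.
have L3 : L * (c * vnorm d) * vnorm d <= Rabs L * (vnorm d)^2.
  have HLa := Rle_abs L. have HLb := Rabs_pos L.
  have Hdd : 0 <= vnorm d * vnorm d by nra.
  have -> : L * (c * vnorm d) * vnorm d = L * c * (vnorm d * vnorm d) by ring.
  have -> : Rabs L * (vnorm d)^2 = Rabs L * (vnorm d * vnorm d) by ring.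
  apply: Rmult_le_compat_r => //. nra.
lra.
Qed.

Definition vz (k : nat) : vec k := fun _ => 0.
Arguments vz : clear implicits.

Lemma vdot_vz_l k (a : vec k) : vdot (vz k) a = 0.
Proof. apply: sum_eq0 => i; rewrite /vz; ring. Qed.

Lemma vdot_self0 k (a : vec k) : vdot (vsub a a) (vsub a a) = 0.
Proof. apply: sum_eq0 => i; rewrite /vsub; ring. Qed.

Lemma vsub_vz k : vdot (vsub (vz k) (vz k)) (vsub (vz k) (vz k)) = 0.
Proof. exact: vdot_self0. Qed.

Lemma add_ind_iff (P Q : Prop) r : (P <-> Q) -> add_ind P r = add_ind Q r.
Proof.
move=> H; rewrite /add_ind.
case: (excluded_middle_informative P); case: (excluded_middle_informative Q); tauto.
Qed.

Lemma add_ind_T (P : Prop) r : P -> add_ind P r = Some r.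
Proof. move=> H; rewrite /add_ind; case: (excluded_middle_informative P) => //. Qed.

Lemma add_ind_S (P : Prop) r s : add_ind P r = Some s -> P.
Proof. rewrite /add_ind; case: (excluded_middle_informative P) => //. Qed.

Lemma FbarA n m (f P1 P2 : vec n -> R) (g : 'I_m -> vec n -> R) gg (x : vec n) (w : vec m) :
  Fbar f P1 P2 g gg (x, x, w) = Fobj f P1 P2 g x.
Proof.
rewrite /Fbar /Fobj /=. apply: add_ind_iff. rewrite /feasible.
have E : forall i, Gbar g gg x x w i = g i x.
  move=> i; rewrite /Gbar.
  have -> : vdot (gg i x) (vsub x x) = 0 by apply: sum_eq0 => j; rewrite /vsub; ring.
  have -> : vnorm (vsub x x) = 0 by rewrite /vnorm vdot_self0 sqrt_0.
  ring.
split => H i; move: (H i); by rewrite E.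
Qed.

Lemma sqrt2_le D : 0 <= D -> sqrt (D + D + 0) <= 2 * sqrt D.
Proof.
move=> HD. have HD' := sqrt_pos D.
rewrite -(sqrt_square (2 * sqrt D)); last lra.
apply: sqrt_le_1_alt.
have -> : 2 * sqrt D * (2 * sqrt D) = 4 * (sqrt D * sqrt D) by ring.
rewrite sqrt_sqrt //. lra.
Qed.

Lemma tri_diag n m (a b : vec n) (w : vec m) :
  @cnorm (tripE n m) (@csub (tripE n m) (a, a, w) (b, b, w)) <= 2 * vnorm (vsub a b).
Proof.
rewrite /cnorm /= vdot_self0. exact: sqrt2_le (vdot_ge0 _).
Qed.

Lemma tri_v n m (a b : vec n) :
  @cnorm (tripE n m) (@csub (tripE n m) (a, vz n, vz m) (b, vz n, vz m)) = vnorm (vsub a b).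
Proof. rewrite /cnorm /= !vsub_vz /vnorm; f_equal; ring. Qed.

Lemma tri_v0 n m (a : vec n) :
  @cnorm (tripE n m) (a, vz n, vz m) = vnorm a.
Proof. rewrite /cnorm /= !vdot_vz_l /vnorm; f_equal; ring. Qed.

Lemma tri_ge_x n m (p q : car (tripE n m)) :
  vnorm (vsub p.1.1 q.1.1) <= @cnorm (tripE n m) (@csub (tripE n m) p q).
Proof.
rewrite /cnorm /vnorm /=; apply: sqrt_le_1_alt.
have := vdot_ge0 (vsub p.1.2 q.1.2). have := vdot_ge0 (vsub p.2 q.2). lra.
Qed.

Lemma tri_ge_w n m (p q : car (tripE n m)) :
  vnorm (vsub p.2 q.2) <= @cnorm (tripE n m) (@csub (tripE n m) p q).
Proof.
rewrite /cnorm /vnorm /=; apply: sqrt_le_1_alt.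
have := vdot_ge0 (vsub p.1.2 q.1.2). have := vdot_ge0 (vsub p.1.1 q.1.1). lra.
Qed.

Lemma cv_dom (a b : nat -> R) : (forall k, 0 <= b k <= 2 * a k) -> Un_cv a 0 -> Un_cv b 0.
Proof.
move=> H Ha eps Heps.
case: (Ha (eps / 2) ltac:(lra)) => N HN. exists N => k Hk.
have := HN k Hk. rewrite /R_dist !Rminus_0_r => h.
have := H k. move: h. rewrite !Rabs_pos_eq; first lra.
- have := H k; lra.
- have := H k; lra.
Qed.

Lemma frechet_lift n m (f P1 P2 : vec n -> R) g gg (w : vec m) :
  (forall z y u, (forall i, Rabs (u i - w i) < 1) -> (forall i, Gbar g gg z y u i <= 0) -> feasible g z) ->
  forall x v, @frechet_sub (vecE n) (Fobj f P1 P2 g) x v ->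
  @frechet_sub (tripE n m) (Fbar f P1 P2 g gg) (x, x, w) (v, vz n, vz m).
Proof.
move=> Hfe x v [hx [Hx Hf]]. exists hx; split; first by rewrite FbarA.
move=> eps Heps. case: (Hf eps Heps) => del [Hdel Hd].
exists (Rmin del 1); split; first by apply: Rmin_pos; lra.
move=> [[z y] u] Hn.
have Nz := tri_ge_x (z, y, u) (x, x, w). have Nu := tri_ge_w (z, y, u) (x, x, w).
simpl in Nz, Nu, Hn.
have Hm1 := Rmin_l del 1. have Hm2 := Rmin_r del 1.
rewrite /Fbar /=. rewrite /add_ind.
case: (excluded_middle_informative _) => HG //=.
have Hz : feasible g z.
  apply: (Hfe z y u) => // i.
  apply: Rle_lt_trans (comp_le (vsub u w) i) _. lra.
have Hzd : vnorm (vsub z x) < del by lra.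
have : r_le_e (hx + vdot v (vsub z x) - eps * vnorm (vsub z x)) (Fobj f P1 P2 g z) := Hd z Hzd.
rewrite /Fobj (add_ind_T _ Hz) /=.
rewrite !vdot_vz_l.
have := Rmult_le_compat_l _ _ _ (Rlt_le _ _ Heps) Nz. lra.
Qed.

Lemma limiting_lift n m (f P1 P2 : vec n -> R) g gg (w : vec m) :
  (forall z y u, (forall i, Rabs (u i - w i) < 1) -> (forall i, Gbar g gg z y u i <= 0) -> feasible g z) ->
  forall x v, @limiting_sub (vecE n) (Fobj f P1 P2 g) x v ->
  @limiting_sub (tripE n m) (Fbar f P1 P2 g gg) (x, x, w) (v, vz n, vz m).
Proof.
move=> Hfe x v [xs [vs [hs [hx [Hx [Hcx [Hhs [Hcv [Hfr Hvs]]]]]]]]].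
exists (fun k => (xs k, xs k, w)), (fun k => (vs k, vz n, vz m)), hs, hx.
split; first by rewrite FbarA.
split.
  apply: cv_dom Hcx => k; split; first exact: sqrt_pos.
  exact: tri_diag.
split; first by move=> k; rewrite FbarA.
split => //.
split; first by move=> k; apply: frechet_lift.
move=> eps Heps; case: (Hvs eps Heps) => N HN; exists N => k Hk.
rewrite tri_v. exact: HN.
Qed.

Theorem mainTheorem12 (n m : nat)
  (f : vec n -> R) (gf : vec n -> vec n) (P1 P2 : vec n -> R)
  (g : 'I_m -> vec n -> R) (gg : 'I_m -> vec n -> vec n) (alpha : R)
  (* standing assumptions of (P) *)
  (Hf : has_grad f gf) (Hgfc : vcont gf)
  (HP1 : convex P1) (HP1c : rcont P1) (HP2 : convex P2) (HP2c : rcont P2)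
  (Hgc : forall i, rcont (g i))
  (Hfeas : exists x, feasible g x)
  (* Assumption A *)
  (HA1 : exists Lf, lipschitz gf Lf)
  (HA2 : forall i, has_grad (g i) (gg i) /\ exists Lg, lipschitz (gg i) Lg)
  (HA3 : level_bounded (Fobj f P1 P2 g))
  (* Assumption B *)
  (HB1 : forall i, vcont (gg i)) (HB2 : MFCQ g gg)
  (* Assumption C *)
  (HC : forall i, exists H, has_jac (gg i) H /\ forall j k, rcont (fun x => H x j k))
  (* Assumption E *)
  (HE1 : forall x, P2 x = 0) (HE2 : convex f) (HE3 : forall i, convex (g i))
  (Halpha : 0 <= alpha < 1)
  (HKL : KL_exp (tripE n m) (Fbar f P1 P2 g gg) alpha) :
  KL_exp (vecE n) (Fobj f P1 P2 g) alpha.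
Proof.
pose Lfun i := proj1_sig (constructive_indefinite_description _ (proj2 (HA2 i))).
have HLf : forall i, lipschitz (gg i) (Lfun i).
  move=> i; exact: (proj2_sig (constructive_indefinite_description _ (proj2 (HA2 i)))).
pose w : vec m := fun i => 2 * Rabs (Lfun i) + 2.
have Hfe : forall z y u, (forall i, Rabs (u i - w i) < 1) ->
    (forall i, Gbar g gg z y u i <= 0) -> feasible g z.
  move=> z y u Hu HG i.
  have D := @descent _ (g i) (gg i) (Lfun i) (proj1 (HA2 i)) (HLf i) y z.
  have Hg := HG i. rewrite /Gbar in Hg.
  have Hui := Hu i. rewrite /w in Hui.
  have [_ Hu1] := Rabs_def2 _ _ Hui.
  have HN : 0 <= (vnorm (vsub z y))^2 by apply: pow2_ge_0.
  have : Rabs (Lfun i) * (vnorm (vsub z y))^2 <= u i / 2 * (vnorm (vsub z y))^2.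
    apply: Rmult_le_compat_r => //. lra.
  lra.
case: HKL => _ [Hlsc HK].
split.
  case: Hfeas => x Hx. exists x, (f x + P1 x - P2 x). exact: add_ind_T.
split.
  move=> x t Ht.
  have Ht' : r_lt_e t (Fbar f P1 P2 g gg (x, x, w)) by rewrite FbarA.
  case: (Hlsc (x, x, w) t Ht') => del [Hd H].
  exists (del / 2); split; first lra.
  move=> z Hz. change (vnorm (vsub z x) < del / 2) in Hz.
  rewrite -(FbarA f P1 P2 g gg z w). apply: H.
  apply: Rle_lt_trans (tri_diag z x w) _. lra.
move=> xh [v Hv].
have Hv' := @limiting_lift n m f P1 P2 g gg w Hfe xh v Hv.
case: (HK (xh, xh, w) (ex_intro _ _ Hv')) => hxh [Hxh [a [Ha [del [a0 [Hdel [Ha0 HH]]]]]]].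
exists hxh; split; first by rewrite -(FbarA f P1 P2 g gg xh w).
exists a; split => //.
exists (del / 2), a0; split; first lra. split => //.
move=> x hx Hx Fx Hlt Ha' v' Hv2.
change (vnorm (vsub x xh) < del / 2) in Hx.
have Hn : @cnorm (tripE n m) (@csub (tripE n m) (x, x, w) (xh, xh, w)) < del.
  apply: Rle_lt_trans (tri_diag x xh w) _. lra.
have Fx' : Fbar f P1 P2 g gg (x, x, w) = Some hx by rewrite FbarA.
have := HH (x, x, w) hx Hn Fx' Hlt Ha' (v', vz n, vz m) (@limiting_lift n m f P1 P2 g gg w Hfe x v' Hv2).
by rewrite tri_v0.
Qed.
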